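(* Let $m,n$ be positive integers, let $\mathbf{0}=(0,\dots,0)$ and let $\mathbf{b}$ be any vertex of $\mathcal{CSR}(m,n)$. Then the distance between $\mathbf{0}$ and $\mathbf{b}$ in $\mathcal{CSR}(m,n)$ is $d(\mathbf{0},\mathbf{b})=m-\tau(\mathbf{b})$.
   Context: For positive integers $m,n$, the cyclic simplicial rook graph $\mathcal{CSR}(m,n)$ is the graph whose vertices are the vectors $(a_1,\dots,a_m)\in\mathbb{Z}_n^m$ with $a_1+\cdots+a_m\equiv 0 \pmod n$, two vertices being adjacent if and only if their vectors differ in exactly two coordinates. The distance $d(u,v)$ is the number of edges of a shortest path between $u$ and $v$. For a vertex $\mathbf{b}=(b_1,\dots,b_m)$, a zero partitioning of size $t$ for $\mathbf{b}$ is a partition of $[m]=\{1,\dots,m\}$ into $t$ parts $P_1,\dots,P_t$ such that $\sum_{j\in P_i} b_j\equiv 0\pmod n$ for every $i\in[t]$; the zero partitioning number $\tau(\mathbf{b})$ is the maximum $t$ for which a zero partitioning of size $t$ for $\mathbf{b}$ exists. *)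

(* Defs.v *)
From mathcomp Require Import all_boot.
Set Implicit Arguments. Unset Strict Implicit. Unset Printing Implicit Defensive.

(* Vertices of CSR(m,n): vectors in Z_n^m (entries represented by 'I_n,
   i.e. residues 0..n-1) with coordinate sum = 0 mod n. *)
Definition vec (m n : nat) := {ffun 'I_m -> 'I_n}.

Definition is_vertex m n (a : vec m n) : bool :=
  (\sum_(i < m) (a i : nat)) %% n == 0.

Definition csr_adj m n (u v : vec m n) : bool :=
  [&& is_vertex u, is_vertex v & #|[set i | u i != v i]| == 2].

Definition walk_len m n (k : nat) (u v : vec m n) : Prop :=
  is_vertex u /\
  exists p : seq (vec m n), [/\ size p = k, path (@csr_adj m n) u p & last u p = v].

Definition csr_dist_is m n (u v : vec m n) (d : nat) : Prop :=
  walk_len d u v /\ forall k, walk_len k u v -> d <= k.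

Definition zero_partitioning m n (b : vec m n) (P : {set {set 'I_m}}) : bool :=
  partition P [set: 'I_m] &&
  [forall B in P, (\sum_(j in B) (b j : nat)) %% n == 0].

Definition tau m n (b : vec m n) : nat :=
  \max_(P : {set {set 'I_m}} | zero_partitioning b P) #|P|.

Definition zero_vec m n (hn : 0 < n) : vec m n := [ffun _ => Ordinal hn].

(* Main.v *)
Require Import Defs.
From mathcomp Require Import all_boot zify.
Set Implicit Arguments. Unset Strict Implicit. Unset Printing Implicit Defensive.

Section S.
Variables (m n : nat).
Implicit Types (v w : vec m n).

Lemma sum_swap v w i j (S : {set 'I_m}) : i != j -> i \in S -> j \in S ->
  (forall x, x != i -> x != j -> v x = w x) ->
  \sum_(x in S) (w x : nat) + (v i + v j) = \sum_(x in S) (v x : nat) + (w i + w j).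
Proof.
move=> nij iS jS agr.
rewrite [\sum_(x in S) (w x : nat)](bigD1 i) // [\sum_(x in S) (v x : nat)](bigD1 i) //.
rewrite (bigD1 j) /=; last by rewrite jS eq_sym.
rewrite [\sum_(x | (x \in S) && (x != i)) (v x : nat)](bigD1 j) /=; last by rewrite jS eq_sym.
rewrite (eq_bigr (fun x => v x : nat)); last first.
  by move=> x /andP [/andP [_ xi] xj]; rewrite agr.
move: (\sum_(i0 | _) _) => R1; lia.
Qed.

Lemma sum_out v w i j (S : {set 'I_m}) : i \notin S -> j \notin S ->
  (forall x, x != i -> x != j -> v x = w x) ->
  \sum_(x in S) (w x : nat) = \sum_(x in S) (v x : nat).
Proof.
move=> iS jS agr; apply: eq_bigr => x xS; rewrite agr //.
  by apply/eqP=> e; rewrite -e xS in iS.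
by apply/eqP=> e; rewrite -e xS in jS.
Qed.

Lemma mod_cancel a b x y : a + x = b + y -> x = y %[mod n] -> a = b %[mod n].
Proof.
move=> e exy; apply/eqP; rewrite -(eqn_modDr x) e.
by rewrite -modnDmr -exy modnDmr.
Qed.

Lemma adj_info v w : csr_adj v w -> exists i j, [/\ i != j, is_vertex v && is_vertex w,
  (forall x, x != i -> x != j -> v x = w x), (v i + v j = w i + w j %[mod n]) &
  (v i != w i) && (v j != w j)].
Proof.
case/and3P=> vv vw /cards2P [i [j [nij e]]].
have agr : forall x, x != i -> x != j -> v x = w x.
  move=> x xi xj; apply/eqP; apply: contraT => d.
  have : x \in [set x | v x != w x] by rewrite inE.
  by rewrite e !inE (negbTE xi) (negbTE xj).
have di : v i != w i.
  have : i \in [set x | v x != w x] by rewrite e !inE eqxx.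
  by rewrite inE.
have dj : v j != w j.
  have : j \in [set x | v x != w x] by rewrite e !inE eqxx orbT.
  by rewrite inE.
exists i, j; split => //; first by rewrite vv vw. 2: by rewrite di dj.

have := sum_swap (S := setT) nij (in_setT _) (in_setT _) agr.
rewrite addnC [X in _ = X]addnC => ee; apply: (mod_cancel ee).
have eT : forall u : vec m n, \sum_(x in [set: 'I_m]) (u x : nat) = \sum_(x < m) (u x : nat).
  by move=> u; apply: eq_bigl => x; rewrite in_setT.
by move: vv vw; rewrite /is_vertex !eT => /eqP -> /eqP ->.
Qed.
End S.

Section L.
Variables (m n : nat).
Implicit Types (v w : vec m n).

Lemma lower_step (f : 'I_m -> 'I_m) v w : csr_adj v w ->
  (forall l, (\sum_(x in [set x | f x == l]) (v x : nat)) %% n = 0) ->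
  exists f' : 'I_m -> 'I_m,
    (forall l, (\sum_(x in [set x | f' x == l]) (w x : nat)) %% n = 0) /\
    #|f @: setT| <= #|f' @: setT| + 1.
Proof.
move=> /adj_info [i [j [nij _ agr eij _]]] Hv.
exists (fun x => if f x == f j then f i else f x); split.
- move=> l; case: (eqVneq l (f i)) => [-> | nli]; set S := [set x | _ == _].
  + have iS : i \in S by rewrite inE; case: ifP.
    have jS : j \in S by rewrite inE eqxx.
    have ee := sum_swap nij iS jS agr.
    have vS : (\sum_(x in S) (v x : nat)) %% n = 0.
      case: (eqVneq (f i) (f j)) => [eq | neq].
      * have -> : S = [set x | f x == f i].
          by apply/setP => x; rewrite !inE; case: ifP => // /eqP ->; rewrite eq eqxx.
        exact: Hv.
      * rewrite (big_setID [set x | f x == f i]).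
        have -> : S :&: [set x | f x == f i] = [set x | f x == f i].
          apply/setP => x; rewrite !inE; case: ifP => [/eqP ->|]; first by rewrite eqxx.
          by move=> _; rewrite andbb.
        have -> : S :\: [set x | f x == f i] = [set x | f x == f j].
          apply/setP => x; rewrite !inE; case: ifP => [/eqP ->|]; first by rewrite eqxx eq_sym neq.
          by move=> _; rewrite andNb.
        change ((\sum_(x in [set x | f x == f i]) (v x : nat) + \sum_(x in [set x | f x == f j]) (v x : nat)) %% n = 0).
        by rewrite -modnDm (Hv (f i)) (Hv (f j)) mod0n.
    by move: (mod_cancel ee eij); rewrite vS.
  + have iS : i \notin S by rewrite inE; case: ifP => _; rewrite eq_sym.
    have jS : j \notin S by rewrite inE eqxx eq_sym.
    rewrite (sum_out iS jS agr).
    case: (eqVneq l (f j)) => [elj | nlj].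
    * have -> : S = set0.
        apply/setP => x; rewrite !inE; case: ifP => [_|]; first by rewrite eq_sym (negbTE nli).
        by rewrite elj => ->.
      by rewrite big_set0 mod0n.
    * have -> : S = [set x | f x == l].
        apply/setP => x; rewrite !inE; case: ifP => [/eqP ->|//].
        by rewrite eq_sym (negbTE nli) eq_sym (negbTE nlj).
      exact: Hv.
- have sub : (f @: setT) :\ f j \subset [set (if f x == f j then f i else f x) | x in setT].
    apply/subsetP => y; rewrite !inE => /andP [nyj /imsetP [x _ ey]].
    apply/imsetP; exists x => //; rewrite -ey (negbTE nyj) //.
  rewrite (cardsD1 (f j)); have := subset_leq_card sub; case: (_ \in _) => /=; lia.
Qed.
End L.

Section L2.
Variables (m n : nat) (hn : 0 < n).

Lemma lower_walk p : path (@csr_adj m n) (zero_vec m hn) p ->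
  exists f : 'I_m -> 'I_m,
    (forall l, (\sum_(x in [set x | f x == l]) (last (zero_vec m hn) p x : nat)) %% n = 0) /\
    m <= #|f @: setT| + size p.
Proof.
elim/last_ind: p => [|p y IH].
  move=> _; exists id; split.
    by move=> l; rewrite big1 ?mod0n // => x _; rewrite /= ffunE.
  by rewrite card_imset // cardsT card_ord addn0.
rewrite rcons_path => /andP [hp ha].
have [f [Hf Hc]] := IH hp.
have [f' [Hf' Hc']] := lower_step ha Hf.
exists f'; split; first by move=> l; rewrite last_rcons; apply: Hf'.
rewrite size_rcons; lia.
Qed.

Lemma part_of_label (b : vec m n) (f : 'I_m -> 'I_m) :
  (forall l, (\sum_(x in [set x | f x == l]) (b x : nat)) %% n = 0) ->
  exists P, zero_partitioning b P /\ #|P| = #|f @: setT|.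
Proof.
move=> Hf; exists (preim_partition f setT); split.
  apply/andP; split; first exact: preim_partitionP.
  apply/forall_inP => B /imsetP [x _ ->].
  have -> : [set y in setT | f x == f y] = [set y | f y == f x].
    by apply/setP => y; rewrite !inE eq_sym.
  by rewrite Hf.
rewrite /preim_partition /equivalence_partition.
rewrite (imset_comp (fun l => [set y in setT | l == f y]) f).
apply: card_in_imset => l1 l2 /imsetP [x1 _ ->] /imsetP [x2 _ ->] e.
have : x1 \in [set y in setT | f x1 == f y] by rewrite !inE eqxx.
by rewrite e !inE => /eqP.
Qed.
End L2.

Lemma modh1 n a c : a < n -> c < n -> (a + (n - c)) %% n = 0 -> a = c.
Proof. move=> ha hc h; have := divn_eq (a + (n - c)) n; rewrite h addn0; move: (_ %/ n) => q e.
case: q e => [|[|q]] e; lia. Qed.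

Lemma modh2 n a c : a < n -> c < n -> a = c %[mod n] -> a = c.
Proof. move=> ha hc; rewrite !modn_small //. Qed.

Section U.
Variables (m n : nat) (hn : 0 < n) (b : vec m n) (P : {set {set 'I_m}}).
Hypothesis hP : partition P [set: 'I_m].
Hypothesis hb : is_vertex b.

Definition nz (u : vec m n) (B : {set 'I_m}) := #|[set x in B | u x != b x]|.
Definition meas u := \sum_(B in P) (nz u B).-1.
Definition good (u : vec m n) := forall B, B \in P ->
  \sum_(x in B) (u x : nat) = \sum_(x in B) (b x : nat) %[mod n].

Lemma nz_ne1 u B : good u -> B \in P -> nz u B != 1.
Proof.
move=> gu BP; apply/negP => /cards1P [x e].
have xD : x \in [set x in B | u x != b x] by rewrite e inE.
move: (xD); rewrite inE => /andP [xB dx].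
have agr : forall y, y \in B -> y != x -> u y = b y.
  move=> y yB yx; apply/eqP; apply: contraT => d.
  have : y \in [set x in B | u x != b x] by rewrite inE yB d.
  by rewrite e inE (negbTE yx).
have := gu B BP.
rewrite (bigD1 x) //= [X in _ = X %[mod n]](bigD1 x) //=.
rewrite (eq_bigr (fun y => b y : nat)); last by move=> y /andP [yB yx]; rewrite agr.
move=> h.
have : u x = b x %[mod n].
  apply/eqP; rewrite -(eqn_modDr (\sum_(i | (i \in B) && (i != x)) (b i : nat))); apply/eqP.
  exact: h.
move/(modh2 (ltn_ord _) (ltn_ord _)) => ee.
by move: dx; rewrite -(inj_eq val_inj) /= ee eqxx.
Qed.

Lemma done_case u : good u -> (forall B, B \in P -> nz u B <= 1) -> u = b.
Proof.
move=> gu H; apply/ffunP => x.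
have xc : x \in cover P by case/and3P: hP => /eqP -> _ _; rewrite in_setT.
have BP := pblock_mem xc.
have h0 : nz u (pblock P x) = 0.
  have := H _ BP; have := nz_ne1 gu BP; case: (nz u _) => [|[|]] //.
have := cards0_eq h0 => /setP /(_ x); rewrite !inE mem_pblock xc /=.
by move/negbT; rewrite negbK => /eqP.
Qed.

Lemma mod_step (a c d : 'I_n) : c + (a + d + (n - c)) %% n = d + a %[mod n].
Proof.
rewrite modnDmr.
have -> : c + (a + d + (n - c)) = d + a + n.
  have := ltn_ord c; lia.
by rewrite modnDr.
Qed.

Lemma step_case u : is_vertex u -> good u -> forall B, B \in P -> 1 < nz u B ->
  exists u', [/\ csr_adj u u', is_vertex u', good u' & meas u' < meas u].
Proof.
move=> vu gu B BP /card_gt1P [j [s [jD sD njs]]].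
move: (jD) (sD); rewrite !inE => /andP [jB dj] /andP [sB ds].
pose u' : vec m n := [ffun x => if x == j then b j
   else if x == s then Ordinal (ltn_pmod (u s + u j + (n - b j)) hn) else u x].
have u'j : u' j = b j by rewrite ffunE eqxx.
have u's : (u' s : nat) = (u s + u j + (n - b j)) %% n.
  by rewrite ffunE eq_sym (negbTE njs) eqxx.
have agr : forall x, x != j -> x != s -> u x = u' x.
  by move=> x xj xs; rewrite ffunE (negbTE xj) (negbTE xs).
have emod : u j + u s = u' j + u' s %[mod n].
  by rewrite u'j u's mod_step addnC.
have sumin : forall S : {set 'I_m}, j \in S -> s \in S ->
    \sum_(x in S) (u' x : nat) = \sum_(x in S) (u x : nat) %[mod n].
  by move=> S jS sS; apply: (mod_cancel (sum_swap njs jS sS agr) emod).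
have sumout : forall S : {set 'I_m}, j \notin S -> s \notin S ->
    \sum_(x in S) (u' x : nat) = \sum_(x in S) (u x : nat).
  by move=> S jS sS; apply: (sum_out jS sS agr).
have vu' : is_vertex u'.
  have eT : forall w : vec m n, \sum_(x in [set: 'I_m]) (w x : nat) = \sum_(x < m) (w x : nat).
    by move=> w; apply: eq_bigl => x; rewrite in_setT.
  move: vu; rewrite /is_vertex -!eT => /eqP h; apply/eqP.
  by rewrite sumin ?in_setT.
have tP : trivIset P by case/and3P: hP.
have other : forall B', B' \in P -> B' != B -> (j \notin B') && (s \notin B').
  move=> B' B'P nB; have dis := trivIsetP tP _ _ B'P BP nB.
  by rewrite (disjointFl dis jB) (disjointFl dis sB).
exists u'; split => //.
- apply/and3P; split => //; apply/eqP.
  have -> : [set x | u x != u' x] = [set j; s].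
    apply/setP => x; rewrite !inE.
    case: (eqVneq x j) => [-> | xj]; first by rewrite u'j dj.
    case: (eqVneq x s) => [-> | xs]; last by rewrite agr // eqxx.
    rewrite /=; apply/negP => /eqP e.
    have : (u s : nat) = u' s by rewrite e.
    rewrite u's => e2.
    have e3 : (u s + (u j + (n - b j))) %% n = (u s + 0) %% n by rewrite addnA -e2 addn0 modn_small.
    move/eqP: e3; rewrite eqn_modDl mod0n => /eqP /(modh1 (ltn_ord _) (ltn_ord _)) e4.
    by move: dj; rewrite -(inj_eq val_inj) /= e4 eqxx.
  by rewrite cards2 njs.
- move=> B' B'P; case: (eqVneq B' B) => [-> | nB].
    by rewrite sumin // gu.
  by case/andP: (other _ B'P nB) => jB' sB'; rewrite sumout // gu.
- rewrite /meas (bigD1 B) //= [X in _ < X](bigD1 B) //=.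
  have -> : \sum_(i in P | i != B) (nz u' i).-1 = \sum_(i in P | i != B) (nz u i).-1.
    apply: eq_bigr => B' /andP [B'P nB]; congr (_.-1); rewrite /nz; apply: eq_card => x.
    rewrite !inE; case xB': (x \in B') => //=.
    case/andP: (other _ B'P nB) => jB' sB'.
    rewrite agr //; first by apply/eqP => e; rewrite -e xB' in jB'.
    by apply/eqP => e; rewrite -e xB' in sB'.
  have sub : [set x in B | u' x != b x] \subset [set x in B | u x != b x] :\ j.
    apply/subsetP => x; rewrite !inE => /andP [xB dx].
    case: (eqVneq x j) => [e | xj]; first by move: dx; rewrite e u'j eqxx.
    rewrite xB /=; case: (eqVneq x s) => [-> // | xs].
    by rewrite agr.
  have := subset_leq_card sub => hle.
  have := cardsD1 j [set x in B | u x != b x]; rewrite jD /= => hc.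
  rewrite ltn_add2r /nz hc.
  have h2 : 1 < #|[set x in B | u x != b x]| by apply/card_gt1P; exists j, s.
  move: h2 hle; rewrite hc.
  move: (#|[set x in B | u x != b x] :\ j|) (#|[set x in B | u' x != b x]|) => a c.
  case: a => [|a] //= _ h; case: c h => [|c] //=.
Qed.

Lemma dichot u : is_vertex u -> good u ->
  u = b \/ exists u', [/\ csr_adj u u', is_vertex u', good u' & meas u' < meas u].
Proof.
move=> vu gu.
case: (boolP [exists B in P, 1 < nz u B]) => [/exists_inP [B BP h]|H].
  right; exact: (step_case vu gu BP h).
left; apply: (done_case gu) => B BP; rewrite leqNgt; apply: contraNN H => h.
by apply/exists_inP; exists B.
Qed.

Lemma upper k : forall u, is_vertex u -> good u -> meas u <= k ->
  exists p, [/\ size p <= k, path (@csr_adj m n) u p & last u p = b].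
Proof.
elim: k => [|k IH] u vu gu hk.
  case: (dichot vu gu) => [-> | [u' [_ _ _ lt]]]; first by exists [::].
  by move: lt; rewrite ltnNge (leq_trans hk).
case: (dichot vu gu) => [-> | [u' [a v' g' lt]]]; first by exists [::].
have [p [sp pp lp]] := IH u' v' g' (leq_trans lt hk).
by exists (u' :: p); split => //=; rewrite a pp.
Qed.

End U.

Theorem lemma1 (m n : nat) (hm : 0 < m) (hn : 0 < n) (b : vec m n) :
  is_vertex b -> csr_dist_is (zero_vec m hn) b (m - tau b).
Proof.
move=> hb.
have eT : forall w : vec m n, \sum_(x in [set: 'I_m]) (w x : nat) = \sum_(x < m) (w x : nat).
  by move=> w; apply: eq_bigl => x; rewrite in_setT.
have z0 : forall B : {set 'I_m}, \sum_(x in B) (zero_vec m hn x : nat) = 0.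
  by move=> B; rewrite big1 // => x _; rewrite ffunE.
have vz : is_vertex (zero_vec m hn).
  by rewrite /is_vertex -eT z0 mod0n.
have zpT : zero_partitioning b [set [set: 'I_m]].
  apply/andP; split.
    apply/and3P; split; [by rewrite cover1 | exact: trivIset1 | ].
    rewrite inE; apply/negP => /eqP e.
    by have := in_setT (Ordinal hm); rewrite -e inE.
  by apply/forall_inP => B; rewrite inE => /eqP ->; rewrite eT.
have [P0 P0z eqt] : {P0 | P0 \in zero_partitioning b & tau b = #|P0|}.
  apply: eq_bigmax_cond; apply/card_gt0P; exists [set [set: 'I_m]]; exact: zpT.
have lower : forall k, walk_len k (zero_vec m hn) b -> m - tau b <= k.
  move=> k [_ [p [sp pp lp]]].
  have [f [Hf Hc]] := lower_walk pp.
  rewrite lp in Hf.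
  have [P [zP cP]] := part_of_label Hf.
  have := @leq_bigmax_cond _ (zero_partitioning b) (fun P => #|P|) P zP.
  rewrite -/(tau b) cP; lia.
move: P0z; rewrite unfold_in => /andP [hP0 zs].
have gz : good b P0 (zero_vec m hn).
  move=> B BP; rewrite z0 mod0n; apply/esym/eqP; exact: (forall_inP zs B BP).
have hmeas : meas b P0 (zero_vec m hn) <= m - #|P0|.
  have h1 : meas b P0 (zero_vec m hn) <= \sum_(B in P0) (#|B|).-1.
    apply: leq_sum => B _; rewrite /nz.
    have : [set x in B | zero_vec m hn x != b x] \subset B.
      by apply/subsetP => x; rewrite inE => /andP [].
    by move/subset_leq_card => h; rewrite -!subn1 leq_sub2r.
  apply: (leq_trans h1).
  have hm' := card_partition hP0; rewrite cardsT card_ord in hm'.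
  have : \sum_(B in P0) #|B|.-1 + #|P0| = \sum_(B in P0) #|B|.
    rewrite -sum1_card -big_split /=; apply: eq_bigr => B BP.
    rewrite addn1 prednK // card_gt0; case/and3P: hP0 => _ _ n0.
    by apply: contraNneq n0 => <-.
  lia.
have [p [sp pp lp]] := upper hn hP0 hb vz gz hmeas.
have hw : walk_len (size p) (zero_vec m hn) b by split => //; exists p.
have hl := lower _ hw.
have e : size p = m - tau b by rewrite eqt in hl *; lia.
by split; [rewrite -e | exact: lower].
Qed.
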